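(* Let $1<p<\infty$, $n\ge 1$, and let $f\in C([0,\infty))$, $g\in C^{0,1}([0,\infty))$ be strictly increasing with $f(0)=g(0)=0$. Let $0<R<\infty$ and let $v=v(r)$ be a solution on $[0,R]$ of $$\operatorname{sign}(v')\big(r^{n-1}|v'|^{p-1}\big)'=r^{n-1}\big(f(v)\pm g(|v'|)\big),\qquad v(0)=v_0>0,\quad v'(0)=0,$$ where the sign $\pm$ is fixed (either $+$ throughout or $-$ throughout). Then for all $r\in(0,R)$: $v(r)>0$, $v'(r)>0$, $v''(r)\ge0$, and $v(r)\le v_0+R\,v'(r)$.
   Context: This ODE is the equation $\Delta_p u=f(u)\pm g(|\nabla u|)$, $\Delta_p u=\operatorname{div}(|\nabla u|^{p-2}\nabla u)$, written for radial functions $u(x)=v(|x|)$. *)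

(* Defs.v *)
From Stdlib Require Import Reals Lra.
From Coquelicot Require Import Coquelicot.
Open Scope R_scope.

(* phi_p(s) = |s|^(p-2) s = sign(s) |s|^(p-1), with phi_p(0) = 0. *)
Definition phi_p (p s : R) : R :=
  if Rlt_dec 0 s then Rpower s (p - 1)
  else if Rlt_dec s 0 then - Rpower (- s) (p - 1)
  else 0.

Definition cont_within (D : R -> Prop) (h : R -> R) (x : R) : Prop :=
  filterlim h (within D (locally x)) (locally (h x)).

Definition nonneg_half (x : R) : Prop := 0 <= x.

Definition continuous_on_halfline (h : R -> R) : Prop :=
  forall x, 0 <= x -> cont_within nonneg_half h x.

Definition strict_incr_halfline (h : R -> R) : Prop :=
  forall x y, 0 <= x -> x < y -> h x < h y.

(* g in C^{0,1}([0,oo)) : (locally) Lipschitz on [0,oo), i.e. Lipschitz on each [0,M] *)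
Definition loc_lipschitz_halfline (h : R -> R) : Prop :=
  forall M, 0 <= M -> exists L, 0 <= L /\
    forall x y, 0 <= x <= M -> 0 <= y <= M -> Rabs (h x - h y) <= L * Rabs (x - y).

(* v is a (C^1([0,R])) radial solution on [0,R] of
     (r^{n-1} |v'|^{p-2} v')' = r^{n-1} (f(v) + s g(|v'|)),  s = +1 or -1,
   with v(0) = v0, v'(0) = 0; dv is the derivative of v. *)
Definition is_radial_solution (p : R) (n : nat) (f g : R -> R) (s Rr v0 : R)
  (v dv : R -> R) : Prop :=
  (forall r, 0 <= r <= Rr -> cont_within (fun x => 0 <= x <= Rr) v r) /\
  (forall r, 0 <= r <= Rr -> cont_within (fun x => 0 <= x <= Rr) dv r) /\
  (forall r, 0 < r < Rr -> is_derive v r (dv r)) /\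
  (forall r, 0 < r < Rr ->
     is_derive (fun x => x ^ (n - 1) * phi_p p (dv x)) r
               (r ^ (n - 1) * (f (v r) + s * g (Rabs (dv r))))) /\
  v 0 = v0 /\ dv 0 = 0.

(* Main.v *)
Require Import Defs.
From Stdlib Require Import Reals Lra Classical.
From Coquelicot Require Import Coquelicot.
Open Scope R_scope.

Definition ctw (D : R -> Prop) (h : R -> R) (x : R) : Prop :=
  forall eps, 0 < eps -> exists del, 0 < del /\
    forall t, D t -> Rabs (t - x) < del -> Rabs (h t - h x) < eps.

Lemma ball_R (x e y : R) : ball x e y <-> Rabs (y - x) < e.
Proof. unfold ball; simpl; unfold AbsRing_ball; simpl; unfold abs, minus, plus, opp; simpl; tauto. Qed.

Lemma cw_ctw D h x : cont_within D h x -> ctw D h x.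
Proof.
  intros H eps Heps.
  assert (HP := H (ball (h x) (mkposreal eps Heps)) (locally_ball _ _)).
  destruct HP as [del Hdel].
  exists (pos del); split; [apply cond_pos|].
  intros t Dt Ht. apply ball_R. apply Hdel; [apply ball_R; exact Ht| exact Dt].
Qed.

Lemma cont_ctw D h x : continuous h x -> ctw D h x.
Proof.
  intros H eps Heps.
  assert (HP := H (ball (h x) (mkposreal eps Heps)) (locally_ball _ _)).
  destruct HP as [del Hdel].
  exists (pos del); split; [apply cond_pos|].
  intros t Dt Ht. apply ball_R. apply Hdel; apply ball_R; exact Ht.
Qed.

Lemma ctw_cont D h x : (exists e, 0 < e /\ forall t, Rabs (t - x) < e -> D t) ->
  ctw D h x -> continuous h x.
Proof.
  intros [e [He HD]] H P [eps HP].
  destruct (H eps (cond_pos eps)) as [del [Hdel Ht]].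
  exists (mkposreal (Rmin e del) (Rmin_pos _ _ He Hdel)).
  intros t Hb. apply ball_R in Hb. simpl in Hb.
  apply HP. apply ball_R. apply Ht.
  - apply HD. apply Rlt_le_trans with (1 := Hb). apply Rmin_l.
  - apply Rlt_le_trans with (1 := Hb). apply Rmin_r.
Qed.

Lemma ctw_sub (D D' : R -> Prop) h x : (forall t, D' t -> D t) -> ctw D h x -> ctw D' h x.
Proof.
  intros HD H eps Heps. destruct (H eps Heps) as [del [Hd Ht]].
  exists del; split; auto.
Qed.

Lemma cont_ctwT h x : continuous h x -> ctw (fun _ => True) h x.
Proof. apply cont_ctw. Qed.

Lemma der_cont (f : R -> R) x l : is_derive f x l -> continuous f x.
Proof.
  intro H. apply (ex_derive_continuous (K := R_AbsRing) (V := R_NormedModule)).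
  exists l; exact H.
Qed.

Lemma mvt_in a b f df : a < b ->
  (forall x, a < x < b -> is_derive f x (df x)) ->
  ctw (fun t => a <= t <= b) f a -> ctw (fun t => a <= t <= b) f b ->
  exists c, a < c < b /\ f b - f a = df c * (b - a).
Proof.
  intros Hab Hd Ha Hb.
  set (cl := fun x => Rmax a (Rmin b x)).
  assert (Hcl : forall x, a <= cl x <= b).
  { intro x; unfold cl; split. apply Rmax_l. apply Rmax_lub. lra. apply Rmin_l. }
  assert (Hclid : forall x, a <= x <= b -> cl x = x).
  { intros x Hx; unfold cl. rewrite Rmin_right by lra. rewrite Rmax_right by lra. reflexivity. }
  assert (Hcll : forall x y, Rabs (cl x - cl y) <= Rabs (x - y)).
  { intros x y; unfold cl, Rmax, Rmin.
    repeat (destruct Rle_dec); repeat (destruct Rle_dec);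
    unfold Rabs; repeat destruct Rcase_abs; lra. }
  set (F := fun x => f (cl x)).
  assert (HctwF : forall x, a <= x <= b -> ctw (fun t => a <= t <= b) f x).
  { intros x Hx. destruct (Req_dec x a) as [->|Hxa]; auto.
    destruct (Req_dec x b) as [->|Hxb]; auto.
    apply cont_ctw. eapply der_cont. apply Hd. lra. }
  assert (HcF : forall x, a <= x <= b -> continuity_pt F x).
  { intros x Hx. apply continuity_pt_filterlim.
    apply (ctw_cont (fun _ => True)). exists 1; split; auto; lra.
    intros eps Heps. destruct (HctwF x Hx eps Heps) as [del [Hdel Ht]].
    exists del; split; auto. intros t _ Htx. unfold F.
    rewrite (Hclid x Hx).
    apply Ht. apply Hcl.
    apply Rle_lt_trans with (2 := Htx). rewrite <- (Hclid x Hx) at 1. apply Hcll. }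
  assert (HdF : forall x, a < x < b -> is_derive F x (df x)).
  { intros x Hx. apply is_derive_ext_loc with f; [|apply Hd; auto].
    assert (H1 : 0 < x - a) by lra. assert (H2 : 0 < b - x) by lra.
    exists (mkposreal (Rmin (x - a) (b - x)) (Rmin_pos _ _ H1 H2)).
    intros t Ht. apply ball_R in Ht. simpl in Ht.
    assert (Hm1 := Rmin_l (x - a) (b - x)). assert (Hm2 := Rmin_r (x - a) (b - x)).
    unfold F. rewrite Hclid; auto. apply Rabs_lt_between in Ht. unfold minus, plus, opp in Ht; simpl in Ht. lra. }
  assert (pr1 : forall c, a < c < b -> derivable_pt F c).
  { intros c Hc. exists (df c). apply is_derive_Reals. apply HdF; auto. }
  destruct (MVT F id a b pr1 (fun c _ => derivable_pt_id c) Hab HcF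
      (fun c _ => derivable_continuous_pt _ _ (derivable_pt_id c))) as [c [P HP]].
  exists c; split; auto.
  rewrite derive_pt_id in HP.
  assert (E : derive_pt F c (pr1 c P) = df c).
  { apply derive_pt_eq_0. apply is_derive_Reals. apply HdF; auto. }
  rewrite E in HP. unfold F, id in HP.
  rewrite !Hclid in HP by lra. lra.
Qed.

Lemma phi_pos p s : 0 < s -> phi_p p s = Rpower s (p - 1).
Proof. intro H; unfold phi_p; destruct (Rlt_dec 0 s); [reflexivity| lra]. Qed.

Lemma phi_nonpos p s : s <= 0 -> phi_p p s <= 0.
Proof.
  intro H; unfold phi_p; destruct (Rlt_dec 0 s); [lra|].
  destruct (Rlt_dec s 0); [|lra]. unfold Rpower. assert (X := exp_pos ((p-1) * ln (-s))). lra.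
Qed.

Lemma phi_zero p : phi_p p 0 = 0.
Proof. apply Rle_antisym. apply phi_nonpos; lra.
  unfold phi_p; destruct (Rlt_dec 0 0); [lra|]. destruct (Rlt_dec 0 0); lra. Qed.

Lemma Rpower_pos x y : 0 < Rpower x y.
Proof. unfold Rpower; apply exp_pos. Qed.

Lemma Rpower_inv_eq p d : 1 < p -> 0 < d -> Rpower (Rpower d (p - 1)) (/ (p - 1)) = d.
Proof.
  intros Hp Hd. rewrite Rpower_mult. replace ((p - 1) * / (p - 1)) with 1 by (field; lra).
  apply Rpower_1; auto.
Qed.

Lemma phi_small p : 1 < p -> forall eps, 0 < eps -> exists del, 0 < del /\
  forall s, Rabs s < del -> Rabs (phi_p p s) < eps.
Proof.
  intros Hp eps He. exists (Rpower eps (/ (p - 1))). split; [apply Rpower_pos|].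
  assert (Hd : Rpower (Rpower eps (/ (p - 1))) (p - 1) = eps).
  { rewrite Rpower_mult. replace (/ (p - 1) * (p - 1)) with 1 by (field; lra). apply Rpower_1; auto. }
  intros s Hs. unfold phi_p. destruct (Rlt_dec 0 s).
  - rewrite Rabs_right by (left; apply Rpower_pos). rewrite <- Hd.
    apply Rlt_Rpower_l. lra. rewrite Rabs_right in Hs by lra. lra.
  - destruct (Rlt_dec s 0).
    + rewrite Rabs_Ropp, Rabs_right by (left; apply Rpower_pos). rewrite <- Hd.
      apply Rlt_Rpower_l. lra. rewrite Rabs_left in Hs by lra. lra.
    + rewrite Rabs_R0; auto.
Qed.

Lemma g_ctw g : loc_lipschitz_halfline g -> forall x, 0 <= x -> ctw nonneg_half g x.
Proof.
  intros Hg x Hx eps He. destruct (Hg (x + 1)) as [L [HL HLip]]; [lra|].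
  exists (Rmin 1 (eps / (L + 1))). split.
  { apply Rmin_pos. lra. apply Rdiv_lt_0_compat; lra. }
  intros t Ht Htx. unfold nonneg_half in Ht.
  assert (H1 := Rmin_l 1 (eps / (L + 1))). assert (H2 := Rmin_r 1 (eps / (L + 1))).
  apply Rabs_lt_between in Htx as Htx'.
  eapply Rle_lt_trans. apply HLip; lra.
  apply Rle_lt_trans with (L * (eps / (L + 1))).
  apply Rmult_le_compat_l; lra.
  apply Rlt_le_trans with ((L + 1) * (eps / (L + 1))).
  apply Rmult_lt_compat_r. apply Rdiv_lt_0_compat; lra. lra.
  right; field; lra.
Qed.

Lemma ctw_nbhd D h x a b : a < x < b -> (forall t, a < t < b -> D t) -> ctw D h x -> continuous h x.
Proof.
  intros Hx HD H. apply (ctw_cont D); auto.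
  exists (Rmin (x - a) (b - x)). split. apply Rmin_pos; lra.
  intros t Ht. assert (H1 := Rmin_l (x - a) (b - x)). assert (H2 := Rmin_r (x - a) (b - x)).
  apply Rabs_lt_between in Ht. apply HD. lra.
Qed.

Lemma h_ctw D f g s v dv x : continuous_on_halfline f -> loc_lipschitz_halfline g ->
  (s = 1 \/ s = -1) -> ctw D v x -> ctw D dv x -> 0 < v x ->
  ctw D (fun t => f (v t) + s * g (Rabs (dv t))) x.
Proof.
  intros Hf Hg Hs Hv Hdv Hvx eps He.
  assert (He2 : 0 < eps / 2) by lra.
  destruct (cw_ctw _ _ _ (Hf (v x) ltac:(lra)) _ He2) as [d1 [Hd1 Hf1]].
  destruct (Hv (Rmin d1 (v x)) (Rmin_pos _ _ Hd1 Hvx)) as [d2 [Hd2 Hv2]].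
  destruct (g_ctw g Hg (Rabs (dv x)) (Rabs_pos _) _ He2) as [d3 [Hd3 Hg3]].
  destruct (Hdv d3 Hd3) as [d4 [Hd4 Hdv4]].
  exists (Rmin d2 d4). split. apply Rmin_pos; auto.
  intros t Dt Ht.
  assert (Ht2 : Rabs (t - x) < d2) by (eapply Rlt_le_trans; [exact Ht| apply Rmin_l]).
  assert (Ht4 : Rabs (t - x) < d4) by (eapply Rlt_le_trans; [exact Ht| apply Rmin_r]).
  specialize (Hv2 t Dt Ht2). specialize (Hdv4 t Dt Ht4).
  assert (Hm1 := Rmin_l d1 (v x)). assert (Hm2 := Rmin_r d1 (v x)).
  assert (A : Rabs (f (v t) - f (v x)) < eps / 2).
  { apply Rabs_lt_between in Hv2 as Hv2'. apply Hf1. unfold nonneg_half. lra. lra. }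
  assert (B : Rabs (g (Rabs (dv t)) - g (Rabs (dv x))) < eps / 2).
  { apply Hg3. unfold nonneg_half. apply Rabs_pos.
    eapply Rle_lt_trans. apply Rabs_triang_inv2. auto. }
  replace (f (v t) + s * g (Rabs (dv t)) - (f (v x) + s * g (Rabs (dv x))))
    with ((f (v t) - f (v x)) + s * (g (Rabs (dv t)) - g (Rabs (dv x)))) by ring.
  eapply Rle_lt_trans. apply Rabs_triang. rewrite Rabs_mult.
  replace (Rabs s) with 1 by (destruct Hs; subst; unfold Rabs; destruct Rcase_abs; lra).
  lra.
Qed.

Lemma is_derive_eq (f : R -> R) x l l' : is_derive f x l -> l = l' -> is_derive f x l'.
Proof. intros H <-; exact H. Qed.

Lemma y_der (Y : R -> R) (m : nat) t L : 0 < t ->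
  is_derive (fun x => x ^ m * Y x) t L ->
  is_derive Y t (L / t ^ m - INR m * Y t / t).
Proof.
  intros Ht HL.
  assert (Htm : t ^ m <> 0) by (apply pow_nonzero; lra).
  assert (Hi : is_derive (fun x => / x ^ m) t (- (INR m * 1 * t ^ Nat.pred m) / (t ^ m) ^ 2)).
  { apply (is_derive_inv (fun x => x ^ m)); auto.
    apply (is_derive_pow (fun x => x)). exact (@is_derive_id R_AbsRing t). }
  assert (HM := is_derive_mult _ _ _ _ _ HL Hi ltac:(intros; apply Rmult_comm)).
  apply is_derive_ext_loc with (fun x => (x ^ m * Y x) * / x ^ m).
  - exists (mkposreal t Ht). intros x Hx. apply ball_R in Hx. simpl in Hx.
    apply Rabs_lt_between in Hx.
    change R in x. unfold minus, plus, opp in Hx; simpl in Hx. change (@eq R (x ^ m * Y x * / x ^ m) (Y x)). field. apply pow_nonzero; lra.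
  - eapply is_derive_eq. exact HM.
    unfold plus, mult; simpl. destruct m as [|k].
    + simpl. field. lra.
    + simpl. simpl in Htm. assert (t ^ k <> 0) by (apply pow_nonzero; lra).
      field. split; auto. lra.
Qed.

Lemma ctw_der D (f : R -> R) x l : is_derive f x l -> ctw D f x.
Proof. intro H. apply cont_ctw. eapply der_cont; eauto. Qed.

Lemma ctw_minus D f1 f2 x : ctw D f1 x -> ctw D f2 x -> ctw D (fun t => f1 t - f2 t) x.
Proof.
  intros H1 H2 eps He.
  destruct (H1 (eps/2) ltac:(lra)) as [d1 [Hd1 A]].
  destruct (H2 (eps/2) ltac:(lra)) as [d2 [Hd2 B]].
  exists (Rmin d1 d2); split. apply Rmin_pos; auto.
  intros t Dt Ht.
  assert (X1 : Rabs (t - x) < d1) by (eapply Rlt_le_trans; [exact Ht| apply Rmin_l]).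
  assert (X2 : Rabs (t - x) < d2) by (eapply Rlt_le_trans; [exact Ht| apply Rmin_r]).
  specialize (A t Dt X1). specialize (B t Dt X2).
  replace (f1 t - f2 t - (f1 x - f2 x)) with ((f1 t - f1 x) + - (f2 t - f2 x)) by ring.
  eapply Rle_lt_trans. apply Rabs_triang. rewrite Rabs_Ropp. lra.
Qed.

Lemma lub_approx (E : R -> Prop) m u : is_lub E m -> u < m -> exists t, E t /\ u < t.
Proof.
  intros [Hub Hl] Hu.
  destruct (classic (exists t, E t /\ u < t)) as [H|H]; auto.
  exfalso. assert (m <= u); [|lra].
  apply Hl. intros t Et. destruct (Rle_dec t u) as [|n0]; auto.
  exfalso; apply H; exists t; split; auto; lra.
Qed.

Ltac req := match goal with |- @eq _ ?a ?b => change (@eq R a b) end.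

Theorem lemma2p2 (p : R) (n : nat) (f g : R -> R) (s Rr v0 : R) (v dv : R -> R) :
  1 < p -> (1 <= n)%nat ->
  continuous_on_halfline f -> strict_incr_halfline f -> f 0 = 0 ->
  loc_lipschitz_halfline g -> strict_incr_halfline g -> g 0 = 0 ->
  (s = 1 \/ s = -1) ->
  0 < Rr -> 0 < v0 ->
  is_radial_solution p n f g s Rr v0 v dv ->
  forall r, 0 < r < Rr ->
    0 < v r /\ 0 < dv r /\
    (exists d2, is_derive dv r d2 /\ 0 <= d2) /\
    v r <= v0 + Rr * dv r.
Proof.
  intros Hp Hn Hfc Hfi Hf0 Hgl Hgi Hg0 Hs HR Hv0 [Hvc [Hdvc [Hvd [Hwd [Hv0e Hdv0]]]]].
  remember (n - 1)%nat as m eqn:Hm.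
  assert (HN : INR n = INR m + 1).
  { rewrite Hm. rewrite <- S_INR. f_equal. destruct n; [inversion Hn| simpl; rewrite Nat.sub_0_r; reflexivity]. }
  assert (HNp : 1 <= INR n) by (rewrite HN; assert (X := pos_INR m); lra).
  assert (Hm0 := pos_INR m).
  set (D := fun x => 0 <= x <= Rr).
  set (h := fun t => f (v t) + s * g (Rabs (dv t))).
  set (y := fun t => phi_p p (dv t)).
  set (w := fun x => x ^ m * y x).
  set (K := fun t => h t - INR m * y t / t).
  assert (HfP : forall x, 0 < x -> 0 < f x) by (intros x Hx; rewrite <- Hf0; apply Hfi; lra).
  assert (HgP : forall x, 0 < x -> 0 < g x) by (intros x Hx; rewrite <- Hg0; apply Hgi; lra).
  assert (Hfm : forall x z, 0 <= x <= z -> f x <= f z).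
  { intros x z Hx. destruct (Req_dec x z) as [->|]; [lra|]. left; apply Hfi; lra. }
  assert (Hgm : forall x z, 0 <= x <= z -> g x <= g z).
  { intros x z Hx. destruct (Req_dec x z) as [->|]; [lra|]. left; apply Hgi; lra. }
  assert (HwD : forall t, 0 < t < Rr -> is_derive w t (t ^ m * h t)).
  { intros t Ht. exact (Hwd t Ht). }
  assert (HyD : forall t, 0 < t < Rr -> is_derive y t (K t)).
  { intros t Ht. eapply is_derive_eq. apply (y_der y m t _ ltac:(lra) (HwD t Ht)).
    unfold K. req. field. split; [lra| apply pow_nonzero; lra]. }
  assert (Hvct : forall x D', D x -> (forall t, D' t -> D t) -> ctw D' v x).
  { intros x D' Hx HD. apply ctw_sub with D; auto. apply cw_ctw, Hvc, Hx. }
  assert (Hdvct : forall x D', D x -> (forall t, D' t -> D t) -> ctw D' dv x).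
  { intros x D' Hx HD. apply ctw_sub with D; auto. apply cw_ctw, Hdvc, Hx. }
  assert (HhC : forall x, D x -> 0 < v x -> ctw D h x).
  { intros x Hx Hvx. apply h_ctw; auto; apply cw_ctw; auto. }
  assert (Hyc : forall x D', 0 < x < Rr -> ctw D' y x).
  { intros x D' Hx. eapply ctw_der. apply HyD, Hx. }
  assert (Hwc : forall x D', 0 < x < Rr -> ctw D' w x).
  { intros x D' Hx. eapply ctw_der. apply HwD, Hx. }
  assert (HyP : forall t, 0 < dv t -> 0 < y t).
  { intros t Ht. unfold y. rewrite phi_pos by auto. apply Rpower_pos. }
  assert (Hw0 : w 0 = 0).
  { unfold w, y. rewrite Hdv0, phi_zero. ring. }
  assert (Hwc0 : ctw D w 0).
  { intros eps He. destruct (phi_small p Hp eps He) as [d1 [Hd1 Hph]].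
    destruct (Hdvct 0 D ltac:(unfold D; lra) (fun t H => H) d1 Hd1) as [d2 [Hd2 Hdd]].
    exists (Rmin d2 1). split. apply Rmin_pos; lra.
    intros t Dt Ht. rewrite Hw0, Rminus_0_r. unfold w.
    assert (X1 : Rabs (t - 0) < d2) by (eapply Rlt_le_trans; [exact Ht| apply Rmin_l]).
    assert (X2 : Rabs (t - 0) < 1) by (eapply Rlt_le_trans; [exact Ht| apply Rmin_r]).
    specialize (Hdd t Dt X1). rewrite Hdv0, Rminus_0_r in Hdd.
    specialize (Hph _ Hdd). rewrite Rabs_mult.
    rewrite Rminus_0_r in X2. unfold D in Dt.
    assert (Htm : Rabs (t ^ m) <= 1).
    { rewrite <- RPow_abs. rewrite <- (pow1 m). apply pow_incr. split. apply Rabs_pos. lra. }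
    assert (X := Rabs_pos (y t)). unfold y. unfold y in X. nra. }
  assert (Hh0 : h 0 = f v0).
  { unfold h. rewrite Hv0e, Hdv0, Rabs_R0, Hg0. ring. }
  assert (Hfv0 : 0 < f v0) by (apply HfP; lra).
  set (eps0 := f v0 / (2 * INR n)).
  assert (He0 : 0 < eps0) by (unfold eps0; apply Rdiv_lt_0_compat; lra).
  assert (He0' : eps0 <= f v0 / 2).
  { unfold eps0, Rdiv. apply Rmult_le_compat_l; [lra|]. apply Rinv_le_contravar; lra. }
  destruct (HhC 0 ltac:(unfold D; lra) ltac:(rewrite Hv0e; lra) eps0 He0) as [d0 [Hd0 Hhd]].
  set (del0 := Rmin d0 Rr).
  assert (Hdel0 : 0 < del0) by (apply Rmin_pos; lra).
  assert (Hdel0R : del0 <= Rr) by apply Rmin_r.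
  assert (Hdel0d : del0 <= d0) by apply Rmin_l.
  assert (Hhnear : forall t, 0 <= t < del0 -> f v0 - eps0 < h t < f v0 + eps0).
  { intros t Ht. assert (HH : Rabs (h t - h 0) < eps0).
    { apply Hhd. unfold D; lra. rewrite Rminus_0_r, Rabs_right; lra. }
    rewrite Hh0 in HH. apply Rabs_lt_between in HH. lra. }
  assert (HA : forall t, 0 < t < del0 -> 0 < dv t).
  { intros t Ht.
    destruct (mvt_in 0 t w (fun u => u ^ m * h u) ltac:(lra)) as [c [Hc Hmv]].
    - intros x Hx. apply HwD. lra.
    - apply ctw_sub with D. unfold D; intros; lra. exact Hwc0.
    - apply Hwc. lra.
    - rewrite Hw0 in Hmv.
      assert (Hhc : 0 < h c) by (assert (X := Hhnear c ltac:(lra)); lra).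
      assert (0 < c ^ m * h c * (t - 0)) by
        (apply Rmult_lt_0_compat; [apply Rmult_lt_0_compat; [apply pow_lt; lra| lra] | lra]).
      assert (Hwt : 0 < w t) by lra.
      unfold w in Hwt. destruct (Rlt_dec 0 (dv t)) as [|Hn0]; auto.
      assert (y t <= 0) by (apply phi_nonpos; lra). assert (0 < t ^ m) by (apply pow_lt; lra). nra. }
  assert (HB : forall b, 0 < b < Rr -> 0 < dv b).
  { intros b Hb. destruct (Rlt_dec 0 (dv b)) as [|Hnb]; auto. exfalso. apply Rnot_lt_le in Hnb.
    set (T := fun t => 0 < t <= b /\ forall u, 0 < u <= t -> 0 < dv u).
    assert (X3 : 0 < Rmin del0 b) by (apply Rmin_pos; lra).
    assert (X1 := Rmin_l del0 b). assert (X2 := Rmin_r del0 b).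
    set (t0 := Rmin del0 b / 2).
    assert (Ht0 : T t0).
    { split. unfold t0; lra. intros u Hu. apply HA. unfold t0 in Hu. lra. }
    destruct (completeness T) as [r1 Hr1].
    { exists b. intros t [Ht _]. lra. }
    { exists t0; auto. }
    assert (Hr1a : t0 <= r1) by (apply Hr1; auto).
    assert (Hr1b : r1 <= b) by (apply Hr1; intros t [Ht _]; lra).
    assert (Ht0p : 0 < t0) by (destruct Ht0; lra).
    assert (Hleft : forall u, 0 < u < r1 -> 0 < dv u).
    { intros u Hu. destruct (lub_approx T r1 u Hr1 ltac:(lra)) as [t [[Ht Htu] Hut]]. apply Htu. lra. }
    assert (Hdvr1 : continuous dv r1).
    { apply (ctw_nbhd D dv r1 0 Rr). lra. unfold D; intros; lra. apply cw_ctw, Hdvc. unfold D; lra. }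
    assert (Hdv1le : dv r1 <= 0).
    { destruct (Rle_dec (dv r1) 0) as [|Hc]; auto. apply Rnot_le_lt in Hc. exfalso.
      destruct (Req_dec r1 b) as [->|Hrb]. lra.
      destruct (cont_ctwT _ _ Hdvr1 (dv r1) Hc) as [eta [Heta Hdd]].
      assert (Y1 := Rmin_l (r1 + eta/2) b). assert (Y2 := Rmin_r (r1 + eta/2) b).
      assert (Y3 : r1 < Rmin (r1 + eta/2) b) by (apply Rmin_glb_lt; lra).
      assert (Tt' : T (Rmin (r1 + eta/2) b)).
      { split. lra.
        intros u Hu. destruct (Rlt_dec u r1). apply Hleft; lra.
        assert (HH := Hdd u I ltac:(apply Rabs_lt_between; lra)). apply Rabs_lt_between in HH. lra. }
      assert (Rmin (r1 + eta/2) b <= r1) by (apply Hr1; auto). lra. }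
    assert (Hdv1ge : 0 <= dv r1).
    { destruct (Rle_dec 0 (dv r1)) as [|Hc]; auto. apply Rnot_le_lt in Hc. exfalso.
      destruct (cont_ctwT _ _ Hdvr1 (- dv r1) ltac:(lra)) as [eta [Heta Hdd]].
      assert (Y1 := Rmax_l (r1 - eta/2) (r1/2)). assert (Y2 := Rmax_r (r1 - eta/2) (r1/2)).
      assert (Y3 : Rmax (r1 - eta/2) (r1/2) < r1) by (apply Rmax_lub_lt; lra).
      assert (HH := Hdd (Rmax (r1 - eta/2) (r1/2)) I ltac:(apply Rabs_lt_between; lra)).
      apply Rabs_lt_between in HH.
      assert (0 < dv (Rmax (r1 - eta/2) (r1/2))) by (apply Hleft; lra). lra. }
    assert (Hdv1 : dv r1 = 0) by lra.
    assert (Hvr1 : v0 < v r1).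
    { destruct (mvt_in 0 r1 v dv ltac:(lra)) as [c [Hc Hmv]].
      - intros x Hx; apply Hvd; lra.
      - apply Hvct. unfold D; lra. unfold D; intros; lra.
      - apply Hvct. unfold D; lra. unfold D; intros; lra.
      - rewrite Hv0e in Hmv. assert (0 < dv c) by (apply Hleft; lra). nra. }
    assert (Hhr1 : 0 < h r1).
    { unfold h. rewrite Hdv1, Rabs_R0, Hg0, Rmult_0_r, Rplus_0_r. apply HfP. lra. }
    destruct (HhC r1 ltac:(unfold D; lra) ltac:(lra) (h r1) Hhr1) as [eta [Heta Hhh]].
    assert (Y1 := Rmax_l (r1 - eta/2) (r1/2)). assert (Y2 := Rmax_r (r1 - eta/2) (r1/2)).
    assert (Y3 : Rmax (r1 - eta/2) (r1/2) < r1) by (apply Rmax_lub_lt; lra).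
    set (u := Rmax (r1 - eta / 2) (r1 / 2)) in *.
    destruct (mvt_in u r1 w (fun x => x ^ m * h x) ltac:(lra)) as [c [Hc Hmv]].
    - intros x Hx; apply HwD; lra.
    - apply Hwc; lra.
    - apply Hwc; lra.
    - assert (Hwr1 : w r1 = 0) by (unfold w, y; rewrite Hdv1, phi_zero; ring).
      assert (Hwu : 0 < w u) by (unfold w; apply Rmult_lt_0_compat; [apply pow_lt; lra| apply HyP, Hleft; lra]).
      assert (Hhc : 0 < h c).
      { assert (HH := Hhh c ltac:(unfold D; lra) ltac:(apply Rabs_lt_between; lra)). apply Rabs_lt_between in HH. lra. }
      assert (0 < c ^ m * h c * (r1 - u)) by (apply Rmult_lt_0_compat; [apply Rmult_lt_0_compat; [apply pow_lt; lra| lra]| lra]).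
      lra. }
  assert (Hn' : n = S m) by (rewrite Hm; destruct n; [inversion Hn| simpl; rewrite Nat.sub_0_r; reflexivity]).
  assert (HNz : INR n <> 0) by lra.
  assert (Hvinc : forall a b, 0 <= a -> a < b -> b < Rr -> v a < v b).
  { intros a b Ha Hab Hb.
    destruct (mvt_in a b v dv Hab) as [c [Hc Hmv]].
    - intros x Hx; apply Hvd; lra.
    - apply Hvct. unfold D; lra. unfold D; intros; lra.
    - apply Hvct. unfold D; lra. unfold D; intros; lra.
    - assert (0 < dv c) by (apply HB; lra). nra. }
  assert (HvP : forall t, 0 <= t < Rr -> 0 < v t).
  { intros t Ht. destruct (Req_dec t 0) as [->|]. lra.
    assert (X := Hvinc 0 t ltac:(lra) ltac:(lra) ltac:(lra)). lra. }
  assert (Hdvmono : forall a b, 0 < a -> a < b -> b < Rr -> (forall u, a < u < b -> 0 <= K u) -> dv a <= dv b).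
  { intros a b Ha Hab Hb HK.
    destruct (mvt_in a b y K Hab) as [c [Hc Hmv]].
    - intros x Hx; apply HyD; lra.
    - apply Hyc; lra.
    - apply Hyc; lra.
    - assert (Hy : y a <= y b) by (assert (X := HK c Hc); nra).
      destruct (Rle_dec (dv a) (dv b)) as [|Hc']; auto. apply Rnot_le_lt in Hc'. exfalso.
      unfold y in Hy. rewrite !phi_pos in Hy by (apply HB; lra).
      assert (Rpower (dv b) (p-1) < Rpower (dv a) (p-1)) by (apply Rlt_Rpower_l; [lra| split; [apply HB; lra| lra]]). lra. }
  assert (Hphi : forall t C, 0 < t < Rr -> (forall u, 0 < u < t -> h u <= C) -> y t <= t * C / INR n).
  { intros t C Ht HC.
    assert (Hpoly : forall x, is_derive (fun u => u ^ (S m) * C / INR n) x (x ^ m * C)).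
    { intro x. eapply is_derive_eq. auto_derive; auto. req.
      change (match m with 0%nat => 1 | S _ => INR m + 1 end) with (INR (S m)).
      rewrite <- Hn'. field; auto. }
    set (P := fun u => u ^ (S m) * C / INR n - w u).
    destruct (mvt_in 0 t P (fun u => u ^ m * C - u ^ m * h u) ltac:(lra)) as [c [Hc Hmv]].
    - intros x Hx. unfold P. eapply is_derive_eq.
      apply (is_derive_minus _ _ x _ _ (Hpoly x) (HwD x ltac:(lra))). reflexivity.
    - apply ctw_minus. eapply ctw_der, Hpoly. apply ctw_sub with D. unfold D; intros; lra. exact Hwc0.
    - apply ctw_minus. eapply ctw_der, Hpoly. apply Hwc; lra.
    - assert (HP0 : P 0 = 0) by (unfold P; rewrite Hw0; simpl; field; auto).
      assert (Hge : 0 <= P t).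
      { assert (X := HC c Hc). assert (0 < c ^ m) by (apply pow_lt; lra).
        assert (0 <= (c^m * C - c^m * h c) * (t - 0)) by (apply Rmult_le_pos; nra). lra. }
      unfold P, w in Hge. simpl in Hge.
      assert (0 < t ^ m) by (apply pow_lt; lra).
      assert (E: t * t ^ m * C / INR n - t ^ m * y t = t ^ m * (t * C / INR n - y t)) by (field; auto).
      rewrite E in Hge.
      assert (0 <= t * C / INR n - y t).
      { apply Rmult_le_reg_l with (t^m); auto. rewrite Rmult_0_r; auto. }
      lra. }
  assert (Hyle : forall t C, 0 < t < Rr -> (forall u, 0 < u < t -> h u <= C) ->
     INR m * y t / t <= INR m * (C / INR n)).
  { intros t C Ht HC. assert (Hy := Hphi t C Ht HC).
    unfold Rdiv at 1. rewrite Rmult_assoc. apply Rmult_le_compat_l; auto.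
    apply Rmult_le_reg_r with t; [lra|]. rewrite Rmult_assoc, Rinv_l, Rmult_1_r by lra.
    replace (C / INR n * t) with (t * C / INR n) by (field; auto). exact Hy. }
  assert (HK0 : forall t, 0 < t < del0 -> 0 < K t).
  { intros t Ht.
    assert (Hy := Hyle t (f v0 + eps0) ltac:(lra) ltac:(intros u Hu; assert (X := Hhnear u ltac:(lra)); lra)).
    assert (X := Hhnear t ltac:(lra)).
    unfold K.
    assert (Key : f v0 - eps0 - INR m * ((f v0 + eps0) / INR n) = f v0 / (2 * INR n * INR n)).
    { unfold eps0. rewrite HN. field. lra. }
    assert (0 < f v0 / (2 * INR n * INR n)) by (apply Rdiv_lt_0_compat; nra).
    lra. }
  assert (HKc : forall x, 0 < x < Rr -> continuous K x).
  { intros x Hx. apply (ctw_nbhd D K x 0 Rr); auto. unfold D; intros; lra.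
    apply ctw_minus. apply HhC. unfold D; lra. apply HvP; lra.
    apply cont_ctw. apply continuity_pt_filterlim.
    assert (Hc1 : continuity_pt y x) by (apply continuity_pt_filterlim; eapply der_cont; apply HyD; auto).
    assert (H: continuity_pt (div_fct (mult_fct (fct_cte (INR m)) y) id) x).
    { apply continuity_pt_div. apply continuity_pt_mult; auto. apply continuity_pt_const. intros a b; reflexivity.
      apply derivable_continuous_pt, derivable_pt_id. unfold id; lra. }
    exact H. }
  assert (HK : forall b, 0 < b < Rr -> 0 <= K b).
  { intros b Hb. destruct (Rle_dec 0 (K b)) as [|HKb]; auto. apply Rnot_le_lt in HKb. exfalso.
    assert (X3 : 0 < Rmin del0 b) by (apply Rmin_pos; lra).
    assert (X1 := Rmin_l del0 b). assert (X2 := Rmin_r del0 b).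
    set (t0 := Rmin del0 b / 2).
    assert (Ht0p : 0 < t0 < del0) by (unfold t0; lra).
    assert (Ht0b : t0 < b) by (unfold t0; lra).
    assert (HKt0 := HK0 t0 Ht0p).
    destruct Hs as [Hs1|Hs1].
    + set (T := fun t => 0 < t <= b /\ forall u, 0 < u <= t -> 0 <= K u).
      assert (Ht0 : T t0).
      { split. lra. intros u Hu. left. apply HK0. lra. }
      destruct (completeness T) as [r1 Hr1].
      { exists b. intros t [Ht _]. lra. }
      { exists t0; auto. }
      assert (Hr1a : t0 <= r1) by (apply Hr1; auto).
      assert (Hr1b : r1 <= b) by (apply Hr1; intros t [Ht _]; lra).
      assert (Hleft : forall u, 0 < u < r1 -> 0 <= K u).
      { intros u Hu. destruct (lub_approx T r1 u Hr1 ltac:(lra)) as [t [[Ht Htu] Hut]]. apply Htu. lra. }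
      assert (Hhle : forall u, 0 < u < r1 -> h u <= h r1).
      { intros u Hu. unfold h. rewrite Hs1, !Rmult_1_l.
        assert (A1 : v u <= v r1) by (left; apply Hvinc; lra).
        assert (A2 : dv u <= dv r1) by (apply Hdvmono; try lra; intros z Hz; apply Hleft; lra).
        assert (A3 := HvP u ltac:(lra)).
        assert (A4 := HB u ltac:(lra)).
        rewrite !Rabs_right by (left; apply HB; lra).
        assert (f (v u) <= f (v r1)) by (apply Hfm; lra).
        assert (g (dv u) <= g (dv r1)) by (apply Hgm; lra). lra. }
      assert (Hyr1 := Hyle r1 (h r1) ltac:(lra) Hhle).
      assert (Hhr1 : 0 < h r1).
      { unfold h. rewrite Hs1, Rmult_1_l. assert (0 < f (v r1)) by (apply HfP, HvP; lra).
        assert (0 < g (Rabs (dv r1))).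
        { apply HgP. rewrite Rabs_right; [apply HB|left; apply HB]; lra. }
        lra. }
      assert (HKr1 : 0 < K r1).
      { unfold K.
        assert (E : h r1 - INR m * (h r1 / INR n) = h r1 / INR n) by (rewrite HN; field; lra).
        assert (0 < h r1 / INR n) by (apply Rdiv_lt_0_compat; lra). lra. }
      destruct (Req_dec r1 b) as [->|Hrb]. lra.
      destruct (cont_ctwT _ _ (HKc r1 ltac:(lra)) (K r1) HKr1) as [eta [Heta Hdd]].
      assert (Y1 := Rmin_l (r1 + eta/2) b). assert (Y2 := Rmin_r (r1 + eta/2) b).
      assert (Y3 : r1 < Rmin (r1 + eta/2) b) by (apply Rmin_glb_lt; lra).
      assert (Tt' : T (Rmin (r1 + eta/2) b)).
      { split. lra.
        intros u Hu. destruct (Rlt_dec u r1). apply Hleft; lra.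
        assert (HH := Hdd u I ltac:(apply Rabs_lt_between; lra)). apply Rabs_lt_between in HH. lra. }
      assert (Rmin (r1 + eta/2) b <= r1) by (apply Hr1; auto). lra.
    + set (T := fun t => 0 < t <= b /\ 0 <= K t).
      assert (Ht0 : T t0) by (split; lra).
      destruct (completeness T) as [a Hr1].
      { exists b. intros t [Ht _]. lra. }
      { exists t0; auto. }
      assert (Hr1a : t0 <= a) by (apply Hr1; auto).
      assert (Hr1b : a <= b) by (apply Hr1; intros t [Ht _]; lra).
      assert (HKa : 0 <= K a).
      { destruct (Rle_dec 0 (K a)) as [|Hc]; auto. apply Rnot_le_lt in Hc. exfalso.
        destruct (cont_ctwT _ _ (HKc a ltac:(lra)) (- K a) ltac:(lra)) as [eta [Heta Hdd]].
        destruct (lub_approx T a (a - eta/2) Hr1 ltac:(lra)) as [t [[Ht HKt] Hat]].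
        assert (t <= a) by (apply Hr1; split; auto).
        assert (HH := Hdd t I ltac:(apply Rabs_lt_between; lra)). apply Rabs_lt_between in HH. lra. }
      assert (Hab : a < b) by (destruct (Req_dec a b) as [->|]; lra).
      assert (Hright : forall u, a < u <= b -> K u < 0).
      { intros u Hu. destruct (Rlt_dec (K u) 0) as [|Hc]; auto. apply Rnot_lt_le in Hc. exfalso.
        assert (u <= a) by (apply Hr1; split; [lra|auto]). lra. }
      destruct (mvt_in a b y K Hab) as [c [Hc Hmv]].
      * intros x Hx; apply HyD; lra.
      * apply Hyc; lra.
      * apply Hyc; lra.
      * assert (Hyab : y b < y a) by (assert (X := Hright c ltac:(lra)); nra).
        assert (Hdvab : dv b < dv a).
        { destruct (Rlt_dec (dv b) (dv a)) as [|Hc']; auto. apply Rnot_lt_le in Hc'. exfalso.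
          unfold y in Hyab. rewrite !phi_pos in Hyab by (apply HB; lra).
          assert (Rpower (dv a) (p-1) <= Rpower (dv b) (p-1)) by (apply Rle_Rpower_l; [lra| split; [apply HB; lra| lra]]). lra. }
        assert (Hvab : v a < v b) by (apply Hvinc; lra).
        assert (Hya : 0 < y b) by (apply HyP, HB; lra).
        assert (f (v a) <= f (v b)) by (apply Hfm; split; [left; apply HvP; lra| lra]).
        assert (Hg' : g (Rabs (dv b)) <= g (Rabs (dv a))).
        { rewrite !Rabs_right by (left; apply HB; lra). apply Hgm. split; [left; apply HB; lra| lra]. }
        assert (Hq : y b / b <= y a / a).
        { apply Rle_trans with (y a / b). unfold Rdiv; apply Rmult_le_compat_r; [left; apply Rinv_0_lt_compat; lra| lra].
          unfold Rdiv; apply Rmult_le_compat_l; [lra| apply Rinv_le_contravar; lra]. }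
        assert (INR m * (y b / b) <= INR m * (y a / a)) by (apply Rmult_le_compat_l; auto).
        unfold K, h in HKa, HKb. rewrite Hs1 in HKa, HKb.
        assert (E1 : INR m * y b / b = INR m * (y b / b)) by (unfold Rdiv; ring).
        assert (E2 : INR m * y a / a = INR m * (y a / a)) by (unfold Rdiv; ring).
        rewrite E1 in HKb. rewrite E2 in HKa. lra. }
  intros r Hr.
  assert (Hdr := HB r Hr).
  split. apply HvP; lra.
  split. auto.
  split.
  - exists (K r * (/ (p - 1) * Rpower (y r) (/ (p - 1) - 1))).
    split.
    + apply is_derive_ext_loc with (fun x => Rpower (y x) (/ (p - 1))).
      * assert (Z1 : 0 < r) by lra. assert (Z2 : 0 < Rr - r) by lra.
        exists (mkposreal (Rmin r (Rr - r)) (Rmin_pos _ _ Z1 Z2)).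
        intros x Hx. apply ball_R in Hx. simpl in Hx. apply Rabs_lt_between in Hx.
        change R in x. unfold minus, plus, opp in Hx; simpl in Hx.
        assert (Y1 := Rmin_l r (Rr - r)). assert (Y2 := Rmin_r r (Rr - r)).
        unfold y. rewrite phi_pos by (apply HB; lra). req. apply Rpower_inv_eq; auto. apply HB; lra.
      * apply (is_derive_comp (fun z => Rpower z (/(p-1))) y).
        apply is_derive_Reals, derivable_pt_lim_power. apply HyP; auto. apply HyD; auto.
    + apply Rmult_le_pos. apply HK; auto. apply Rmult_le_pos. left; apply Rinv_0_lt_compat; lra. left; apply Rpower_pos.
  - destruct (mvt_in 0 r v dv ltac:(lra)) as [c [Hc Hmv]].
    + intros x Hx; apply Hvd; lra.
    + apply Hvct. unfold D; lra. unfold D; intros; lra.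
    + apply Hvct. unfold D; lra. unfold D; intros; lra.
    + rewrite Hv0e in Hmv. assert (dv c <= dv r) by (apply Hdvmono; try lra; intros; apply HK; lra).
      assert (0 < dv c) by (apply HB; lra). nra.
Qed.
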